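(* Fix $\epsilon>0$. Let $\psi$ be as in the context, and let $\eta>0$ be small enough that for $\lambda\in P(\epsilon,\eta)$ the cuts of $h_\lambda$ lie outside the closed unit disk. Then there is a constant $C$, depending only on $p,\epsilon,\psi,\eta$, such that for all $R>1$, all $\lambda\in P(\epsilon,\eta)$ and all $u\in\Gamma_R$, $$|g_\lambda(u)|\le C\,|\lambda|^{\frac{1}{4p^2}}\,|u|^{1+\frac{1}{2p}-\frac{1}{2p^2}}.$$
   Context: Fix an integer $p\ge2$. Let $T_p(z)$ be the Fuss–Catalan function: the unique solution of $zT^p-T+1=0$ analytic on $\mathbb C\setminus[(p-1)^{p-1}/p^p,\infty)$ with $T_p(0)=1$. Square roots are principal branches. For $\lambda\in\mathbb C$ set $f_\lambda(u)=\sqrt{T_p(-\lambda u^{2p-2})}$, $h_\lambda(u)=uf_\lambda(u)$ and $g_\lambda(u)=h_\lambda(u)-u$. For $\epsilon,\eta>0$ let $P(\epsilon,\eta)=\{\lambda\in\mathbb C:0<|\lambda|<\eta,\ |\arg\lambda|<\pi-\epsilon\}$. The function $h_\lambda$ is analytic away from cuts lying on the rays $\arg u=\frac{\pi-\arg\lambda}{2p-2}+\frac{k\pi}{p-1}$ ($k=-p+2,\dots,p-1$), at $|u|\ge|\lambda|^{-1/(2p-2)}(p-1)^{1/2}p^{-p/(2p-2)}$. Fix an angle $\psi\in(0,\pi/4)$, small enough (depending on $\epsilon,p$) that for every $\lambda$ with $|\arg\lambda|\le\pi-\epsilon$ these rays avoid the double sector $\{|\arg u|\le\psi\}\cup\{|\arg(-u)|\le\psi\}$.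 For $R>1$, the keyhole contour $\Gamma_R$ is the positively oriented boundary of $$D_R=\{|u|<R\}\cap\big(\{|u|<1\}\cup\{|\arg u|<\psi\}\cup\{|\arg(-u)|<\psi\}\big).$$ *)

(* Defs.v *)
From Stdlib Require Import Reals Lra ZArith.
Open Scope R_scope.

Record Cx := mkC { Re : R ; Im : R }.

Definition C0 : Cx := mkC 0 0.
Definition C1 : Cx := mkC 1 0.
Definition RtoC (x : R) : Cx := mkC x 0.
Definition Cadd (z w : Cx) : Cx := mkC (Re z + Re w) (Im z + Im w).
Definition Copp (z : Cx) : Cx := mkC (- Re z) (- Im z).
Definition Csub (z w : Cx) : Cx := Cadd z (Copp w).
Definition Cmul (z w : Cx) : Cx :=
  mkC (Re z * Re w - Im z * Im w) (Re z * Im w + Im z * Re w).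
Definition Cinv (z : Cx) : Cx :=
  let d := Re z * Re z + Im z * Im z in mkC (Re z / d) (- Im z / d).
Definition Cdiv (z w : Cx) : Cx := Cmul z (Cinv w).
Fixpoint Cpow (z : Cx) (n : nat) : Cx :=
  match n with O => C1 | S m => Cmul z (Cpow z m) end.
Definition Cnorm (z : Cx) : R := sqrt (Re z * Re z + Im z * Im z).
Definition Cexpi (theta : R) : Cx := mkC (cos theta) (sin theta).
Definition Cscale (t : R) (z : Cx) : Cx := mkC (t * Re z) (t * Im z).

(* Principal argument, with values in (-PI, PI]; Carg 0 = 0 (never used
   in an essential way). *)
Definition Carg (z : Cx) : R :=
  if Req_EM_T (Cnorm z) 0 then 0
  else if Rle_dec 0 (Im z) then acos (Re z / Cnorm z)
  else - acos (Re z / Cnorm z).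

(* Principal square root: the root with Re >= 0, and with Im >= 0 on the
   negative real axis (branch cut along (-oo,0)). *)
Definition Csqrt (z : Cx) : Cx :=
  mkC (sqrt ((Cnorm z + Re z) / 2))
      (if Rlt_dec (Im z) 0 then - sqrt ((Cnorm z - Re z) / 2)
       else sqrt ((Cnorm z - Re z) / 2)).

Definition Cdifferentiable_at (f : Cx -> Cx) (z : Cx) : Prop :=
  exists L : Cx, forall e, 0 < e -> exists d, 0 < d /\
    forall h, h <> C0 -> Cnorm h < d ->
      Cnorm (Csub (Cdiv (Csub (f (Cadd z h)) (f z)) h) L) < e.

(* The branch point (p-1)^(p-1)/p^p and the slit plane Cx \ [c, oo). *)
Definition fc_branch (p : nat) : R := (INR p - 1) ^ (p - 1) / INR p ^ p.
Definition in_slit_plane (p : nat) (z : Cx) : Prop :=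
  ~ (Im z = 0 /\ fc_branch p <= Re z).

Definition is_FussCatalan (p : nat) (T : Cx -> Cx) : Prop :=
  (forall z, in_slit_plane p z ->
     Cadd (Csub (Cmul z (Cpow (T z) p)) (T z)) C1 = C0) /\
  (forall z, in_slit_plane p z -> Cdifferentiable_at T z) /\
  T C0 = C1.

Definition f_lam (p : nat) (T : Cx -> Cx) (lam u : Cx) : Cx :=
  Csqrt (T (Copp (Cmul lam (Cpow u (2 * p - 2))))).
Definition h_lam (p : nat) (T : Cx -> Cx) (lam u : Cx) : Cx :=
  Cmul u (f_lam p T lam u).
Definition g_lam (p : nat) (T : Cx -> Cx) (lam u : Cx) : Cx :=
  Csub (h_lam p T lam u) u.

Definition inP (eps eta : R) (lam : Cx) : Prop :=
  0 < Cnorm lam < eta /\ Rabs (Carg lam) < PI - eps.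

(* Radius beyond which the cuts of h_lambda lie:
   |lam|^(-1/(2p-2)) (p-1)^(1/2) p^(-p/(2p-2)). *)
Definition cut_radius (p : nat) (lam : Cx) : R :=
  Rpower (Cnorm lam) (- (1 / (2 * INR p - 2)))
  * Rpower (INR p - 1) (1 / 2)
  * Rpower (INR p) (- (INR p / (2 * INR p - 2))).

Definition in_double_sector (psi : R) (u : Cx) : Prop :=
  Rabs (Carg u) <= psi \/ Rabs (Carg (Copp u)) <= psi.

Definition psi_admissible (p : nat) (eps psi : R) : Prop :=
  forall lam : Cx, lam <> C0 -> Rabs (Carg lam) <= PI - eps ->
  forall k : Z, (- Z.of_nat p + 2 <= k <= Z.of_nat p - 1)%Z ->
  forall t : R, 0 < t ->
    ~ in_double_sector psi
        (Cscale t (Cexpi ((PI - Carg lam) / (2 * INR p - 2)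
                          + IZR k * PI / (INR p - 1)))).

Definition in_D (psi Rr : R) (u : Cx) : Prop :=
  Cnorm u < Rr /\
  (Cnorm u < 1 \/ Rabs (Carg u) < psi \/ Rabs (Carg (Copp u)) < psi).

(* u lies on Gamma_R = boundary of D_R (D_R is open, so boundary =
   closure minus D_R). *)
Definition on_Gamma (psi Rr : R) (u : Cx) : Prop :=
  (forall d, 0 < d -> exists v, in_D psi Rr v /\ Cnorm (Csub v u) < d) /\
  ~ in_D psi Rr u.

(* Main.v *)
Require Import Defs.
From Stdlib Require Import Reals.
From Stdlib Require Import Lra Lia ZArith.
Open Scope R_scope.

Lemma Cnorm_ge0 z : 0 <= Cnorm z.
Proof. unfold Cnorm; apply sqrt_pos. Qed.

Lemma Cnorm_sq z : Cnorm z * Cnorm z = Re z * Re z + Im z * Im z.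
Proof. unfold Cnorm; apply sqrt_sqrt; nra. Qed.

Lemma Cnorm_mul a b : Cnorm (Cmul a b) = Cnorm a * Cnorm b.
Proof.
  unfold Cnorm; destruct a as [x y], b as [u v]; simpl.
  rewrite <- sqrt_mult by nra. f_equal; ring.
Qed.

Lemma Cnorm_opp a : Cnorm (Copp a) = Cnorm a.
Proof. unfold Cnorm; destruct a; simpl; f_equal; ring. Qed.

Lemma Cnorm_C1 : Cnorm Defs.C1 = 1.
Proof. unfold Cnorm; simpl. replace (1*1+0*0) with 1 by ring. apply sqrt_1. Qed.

Lemma Cnorm_pow z n : Cnorm (Cpow z n) = Cnorm z ^ n.
Proof.
  induction n; simpl. apply Cnorm_C1. rewrite Cnorm_mul, IHn; ring.
Qed.

Lemma Cnorm_triangle a b : Cnorm (Cadd a b) <= Cnorm a + Cnorm b.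
Proof.
  destruct a as [x y], b as [u v]; unfold Cnorm; simpl.
  pose proof (sqrt_cauchy x y u v) as Hc. unfold Rsqr in Hc.
  pose proof (sqrt_pos (x*x+y*y)). pose proof (sqrt_pos (u*u+v*v)).
  pose proof (sqrt_sqrt (x*x+y*y) ltac:(nra)).
  pose proof (sqrt_sqrt (u*u+v*v) ltac:(nra)).
  rewrite <- (sqrt_Rsqr (sqrt (x * x + y * y) + sqrt (u * u + v * v))) by lra.
  apply sqrt_le_1_alt. unfold Rsqr. nra.
Qed.

Lemma Re_le_norm z : Rabs (Re z) <= Cnorm z.
Proof.
  unfold Cnorm. rewrite <- sqrt_Rsqr_abs. apply sqrt_le_1_alt. unfold Rsqr; nra.
Qed.

Lemma Im_le_norm z : Rabs (Im z) <= Cnorm z.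
Proof.
  unfold Cnorm. rewrite <- sqrt_Rsqr_abs. apply sqrt_le_1_alt. unfold Rsqr; nra.
Qed.

Lemma Cnorm_sub_sym a b : Cnorm (Csub a b) = Cnorm (Csub b a).
Proof. unfold Cnorm; destruct a, b; simpl; f_equal; ring. Qed.

Lemma Cnorm_rev a b : Rabs (Cnorm a - Cnorm b) <= Cnorm (Csub a b).
Proof.
  assert (E1 : a = Cadd (Csub a b) b) by (destruct a, b; unfold Csub, Cadd, Copp; simpl; f_equal; ring).
  assert (E2 : b = Cadd (Csub b a) a) by (destruct a, b; unfold Csub, Cadd, Copp; simpl; f_equal; ring).
  pose proof (Cnorm_triangle (Csub a b) b). rewrite <- E1 in H.
  pose proof (Cnorm_triangle (Csub b a) a). rewrite <- E2 in H0.
  rewrite (Cnorm_sub_sym b a) in H0.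
  apply Rabs_le; lra.
Qed.

Lemma Cnorm_inv h : 0 < Cnorm h -> Cnorm (Cinv h) = / Cnorm h.
Proof.
  intro Hp. pose proof (Cnorm_sq h) as Hs.
  destruct h as [x y]; simpl in *. set (N := Cnorm (mkC x y)) in *.
  unfold Cnorm at 1; simpl.
  assert (Hd : x*x+y*y <> 0) by nra.
  replace (x / (x * x + y * y) * (x / (x * x + y * y)) +
           - y / (x * x + y * y) * (- y / (x * x + y * y))) with ((/N)*(/N)).
  - rewrite sqrt_square; auto. left; apply Rinv_0_lt_compat; lra.
  - rewrite <- Hs. transitivity ((x*x+y*y)/(N*N*(N*N))).
      + rewrite <- Hs. field. lra.
      + field. lra.
Qed.

Lemma Cnorm_pos_neq z : 0 < Cnorm z -> z <> Defs.C0.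
Proof.
  intros H E; subst; unfold Cnorm in H; simpl in H.
  replace (0*0+0*0) with 0 in H by ring. rewrite sqrt_0 in H; lra.
Qed.

Lemma Cnorm_neq_pos z : z <> Defs.C0 -> 0 < Cnorm z.
Proof.
  intros H. destruct (Cnorm_ge0 z) as [|E]; auto.
  exfalso; apply H. pose proof (Cnorm_sq z). rewrite <- E in H0.
  destruct z as [x y]; simpl in *. unfold Defs.C0. f_equal; nra.
Qed.

Lemma Rabs_le_reg x y : Rabs x <= y -> -y <= x <= y.
Proof. intros H; split; [pose proof (Rabs_Ropp x); pose proof (Rle_abs (-x)); lra | pose proof (Rle_abs x); lra]. Qed.


Lemma Csqrt_facts w : let N := Cnorm w in
  Rabs (Re w) <= N /\ N * N = Re w * Re w + Im w * Im w /\
  Re (Csqrt w) * Re (Csqrt w) = (N + Re w)/2 /\ 0 <= Re (Csqrt w) /\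
  Im (Csqrt w) * Im (Csqrt w) = (N - Re w)/2.
Proof.
  intro N. pose proof (Re_le_norm w) as H1. fold N in H1.
  pose proof (Cnorm_sq w) as H2. fold N in H2.
  pose proof (Rabs_le_reg _ _ H1).
  split; [auto|split; [auto|]]. unfold Csqrt; simpl. fold N.
  split; [apply sqrt_sqrt; lra|]. split; [apply sqrt_pos|].
  destruct (Rlt_dec (Im w) 0).
  - replace (- sqrt ((N - Re w) / 2) * - sqrt ((N - Re w) / 2)) with
      (sqrt ((N - Re w) / 2) * sqrt ((N - Re w) / 2)) by ring.
    apply sqrt_sqrt; lra.
  - apply sqrt_sqrt; lra.
Qed.

Lemma Cnorm_sub1 z : Cnorm (Csub z Defs.C1) = sqrt ((Re z - 1)*(Re z - 1) + Im z * Im z).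
Proof. unfold Cnorm; destruct z; simpl; f_equal; ring. Qed.

Lemma Csqrt_sub1 w :
  Cnorm (Csub (Csqrt w) Defs.C1) <= Cnorm (Csub w Defs.C1) /\
  Cnorm (Csub (Csqrt w) Defs.C1) <= sqrt (Cnorm w + 1).
Proof.
  destruct (Csqrt_facts w) as (H1 & H2 & H3 & H4 & H5).
  set (N := Cnorm w) in *. set (a := Re (Csqrt w)) in *. set (b := Im (Csqrt w)) in *.
  set (x := Re w) in *. set (y := Im w) in *.
  pose proof (Rabs_le_reg _ _ H1).
  assert (HN : 0 <= N) by apply Cnorm_ge0.
  assert (Ha : 2*a <= N+1).
  { assert (Hq : (2*a)*(2*a) <= (N+1)*(N+1)).
    { assert (0 <= (N-1)*(N-1)) by (pose proof (Rle_0_sqr (N-1)); unfold Rsqr in *; lra). replace ((2*a)*(2*a)) with (4*(a*a)) by ring. rewrite H3. replace ((N+1)*(N+1)) with ((N-1)*(N-1) + 4*N) by ring. lra. }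
    destruct (Rle_lt_dec (2*a) (N+1)) as [|Hc]; auto.
    assert ((N+1)*(N+1) < (2*a)*(2*a)) by (apply Rmult_le_0_lt_compat; lra). lra. }
  rewrite !Cnorm_sub1. fold a b x y. split.
  - apply sqrt_le_1_alt.
    assert (0 <= (N+1-2*a)*(N+2*a)) by (apply Rmult_le_pos; lra). nra.
  - apply sqrt_le_1_alt. nra.
Qed.


Lemma fc_pos p : (2 <= p)%nat -> 0 < fc_branch p.
Proof.
  intros Hp. unfold fc_branch.
  assert (1 < INR p) by (apply (lt_INR 1); lia).
  apply Rdiv_lt_0_compat; apply pow_lt; lra.
Qed.

Lemma T_near p T : (2 <= p)%nat -> is_FussCatalan p T ->
  exists d K, 0 < d /\ 0 < K /\ forall h, 0 < Cnorm h < d ->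
    Cnorm (Csub (T h) Defs.C1) <= K * Cnorm h.
Proof.
  intros Hp [_ [Hd H0]].
  assert (Hs : in_slit_plane p Defs.C0).
  { intros [_ Hc]. pose proof (fc_pos p Hp). simpl in Hc. lra. }
  destruct (Hd _ Hs) as [L HL].
  destruct (HL 1 Rlt_0_1) as [d [Hdp Hdd]].
  exists d, (Cnorm L + 1). split; auto. split.
  { pose proof (Cnorm_ge0 L); lra. }
  intros h [Hh1 Hh2].
  specialize (Hdd h (Cnorm_pos_neq h Hh1) Hh2).
  assert (E : Cadd Defs.C0 h = h) by (destruct h; unfold Cadd; simpl; f_equal; ring).
  rewrite E, H0 in Hdd.
  set (Q := Cdiv (Csub (T h) Defs.C1) h) in *.
  assert (HQ : Cnorm Q <= Cnorm L + 1).
  { assert (Q = Cadd (Csub Q L) L) by (destruct Q, L; unfold Csub, Cadd, Copp; simpl; f_equal; ring).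
    rewrite H. pose proof (Cnorm_triangle (Csub Q L) L). lra. }
  unfold Q, Cdiv in HQ. rewrite Cnorm_mul, Cnorm_inv in HQ by auto.
  apply (Rmult_le_compat_r (Cnorm h)) in HQ; [|lra].
  rewrite Rmult_assoc, Rinv_l in HQ by lra. lra.
Qed.

Lemma T_eq p T z : is_FussCatalan p T -> in_slit_plane p z ->
  Cmul z (Cpow (T z) p) = Csub (T z) Defs.C1.
Proof.
  intros [He _] Hz. specialize (He z Hz).
  destruct (Cmul z (Cpow (T z) p)) as [a b] eqn:E.
  destruct (T z) as [u v].
  unfold Cadd, Csub, Copp in He; simpl in He. injection He; intros.
  unfold Csub, Cadd, Copp; simpl. f_equal; lra.
Qed.

Lemma T_far p T z : (2 <= p)%nat -> is_FussCatalan p T -> in_slit_plane p z ->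
  0 < Cnorm z -> Cnorm (T z) <= 1 + 2 / Cnorm z.
Proof.
  intros Hp HT Hz Hn.
  pose proof (T_eq p T z HT Hz) as E.
  apply (f_equal Cnorm) in E. rewrite Cnorm_mul, Cnorm_pow in E.
  set (t := T z) in *.
  assert (Ht1 : Cnorm (Csub t Defs.C1) <= Cnorm t + 1).
  { pose proof (Cnorm_triangle t (Copp Defs.C1)). rewrite Cnorm_opp, Cnorm_C1 in H. exact H. }
  assert (H2z : 0 < 2 / Cnorm z) by (apply Rdiv_lt_0_compat; lra).
  destruct (Rle_lt_dec (Cnorm t) 1) as [|Hgt]; [lra|].
  assert (Hpow : Cnorm t * Cnorm t <= Cnorm t ^ p).
  { replace p with (2 + (p-2))%nat by lia. rewrite pow_add. simpl.
    pose proof (pow_R1_Rle (Cnorm t) (p-2) ltac:(lra)). nra. }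
  assert (Cnorm z * (Cnorm t * Cnorm t) < 2 * Cnorm t).
  { apply (Rmult_le_compat_l (Cnorm z)) in Hpow; lra. }
  assert (Cnorm z * Cnorm t < 2) by nra.
  assert (Cnorm t < 2 / Cnorm z).
  { apply (Rmult_lt_reg_l (Cnorm z)); auto. field_simplify; lra. }
  lra.
Qed.

Lemma Rpower_pos x a : 0 < Rpower x a.
Proof. unfold Rpower; apply exp_pos. Qed.

Lemma Rpower_ge_small x a : 0 < x < 1 -> 0 < a <= 1 -> x <= Rpower x a.
Proof.
  intros Hx Ha. unfold Rpower.
  assert (ln x < 0) by (rewrite <- ln_1; apply ln_increasing; lra).
  rewrite <- (exp_ln x) at 1 by lra.
  destruct (Req_dec a 1) as [->|Hne].
  - rewrite Rmult_1_l; lra.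
  - left; apply exp_increasing. nra.
Qed.

Lemma sqrtT_bound p T a : (2 <= p)%nat -> is_FussCatalan p T -> 0 < a <= 1 ->
  exists C0, 0 < C0 /\ forall z, in_slit_plane p z -> 0 < Cnorm z ->
    Cnorm (Csub (Csqrt (T z)) Defs.C1) <= C0 * Rpower (Cnorm z) a.
Proof.
  intros Hp HT Ha.
  destruct (T_near p T Hp HT) as (d & K & Hd & HK & Hn).
  set (d0 := Rmin d 1).
  assert (Hd0 : 0 < d0) by (unfold d0; apply Rmin_pos; lra).
  assert (Hd0a : d0 <= d) by apply Rmin_l.
  assert (Hd0b : d0 <= 1) by apply Rmin_r.
  set (B := 2 + 2 / d0).
  assert (HB : 0 < B) by (unfold B; assert (0 < 2/d0) by (apply Rdiv_lt_0_compat; lra); lra).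
  pose proof (Rpower_pos d0 a) as HRd.
  exists (K + B / Rpower d0 a). split.
  { assert (0 < B / Rpower d0 a) by (apply Rdiv_lt_0_compat; lra). lra. }
  intros z Hz Hzp.
  pose proof (Rpower_pos (Cnorm z) a) as HRz.
  assert (HBR : 0 < B / Rpower d0 a) by (apply Rdiv_lt_0_compat; lra).
  destruct (Csqrt_sub1 (T z)) as [S1 S2].
  destruct (Rlt_le_dec (Cnorm z) d0) as [Hlt|Hge].
  - specialize (Hn z ltac:(lra)).
    pose proof (Rpower_ge_small (Cnorm z) a ltac:(lra) Ha).
    assert (K * Cnorm z <= K * Rpower (Cnorm z) a) by (apply Rmult_le_compat_l; lra).
    assert (0 <= B / Rpower d0 a * Rpower (Cnorm z) a) by (apply Rmult_le_pos; lra).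
    nra.
  - pose proof (T_far p T z Hp HT Hz Hzp) as Hf.
    assert (2 / Cnorm z <= 2 / d0).
    { apply Rmult_le_compat_l; [lra|]. apply Rinv_le_contravar; lra. }
    assert (Hs : sqrt (Cnorm (T z) + 1) <= B).
    { pose proof (Cnorm_ge0 (T z)).
      assert (1 <= Cnorm (T z) + 1) by lra.
      apply (Rle_trans _ (Cnorm (T z) + 1)); [|unfold B; lra].
      rewrite <- (sqrt_square (Cnorm (T z) + 1)) at 2 by lra.
      apply sqrt_le_1_alt. nra. }
    assert (Rpower d0 a <= Rpower (Cnorm z) a) by (apply Rle_Rpower_l; lra).
    assert (B <= B / Rpower d0 a * Rpower (Cnorm z) a).
    { unfold Rdiv. rewrite Rmult_assoc.
      rewrite <- (Rmult_1_r B) at 1. apply Rmult_le_compat_l; [lra|].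
      apply (Rmult_le_reg_l (Rpower d0 a)); auto.
      rewrite <- Rmult_assoc, Rinv_r by lra. lra. }
    assert (0 <= K * Rpower (Cnorm z) a) by (apply Rmult_le_pos; lra).
    nra.
Qed.


Lemma cos_sin_periodZ x j : cos (x + 2 * IZR j * PI) = cos x /\ sin (x + 2 * IZR j * PI) = sin x.
Proof.
  destruct (Z_le_gt_dec 0 j) as [Hj|Hj].
  - rewrite <- (Z2Nat.id j) by lia. rewrite <- INR_IZR_INZ.
    split; [apply cos_period|apply sin_period].
  - set (k := Z.to_nat (- j)).
    assert (E : IZR j = - INR k).
    { unfold k. rewrite INR_IZR_INZ, Z2Nat.id by lia. rewrite opp_IZR; ring. }
    rewrite E.
    set (y := x + 2 * - INR k * PI).
    assert (x = y + 2 * INR k * PI) by (unfold y; ring).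
    rewrite H. split; [rewrite cos_period|rewrite sin_period]; reflexivity.
Qed.

Lemma polar z : 0 < Cnorm z ->
  Re z = Cnorm z * cos (Carg z) /\ Im z = Cnorm z * sin (Carg z).
Proof.
  intros Hp. pose proof (Re_le_norm z) as H1. pose proof (Rabs_le_reg _ _ H1) as H1'.
  pose proof (Cnorm_sq z) as H2.
  set (N := Cnorm z) in *.
  assert (Hb : -1 <= Re z / N <= 1).
  { split; [apply (Rmult_le_reg_l N); auto; field_simplify; lra|
            apply (Rmult_le_reg_l N); auto; field_simplify; lra]. }
  assert (Hs : sqrt (1 - (Re z / N)²) = Rabs (Im z) / N).
  { assert (Habs : Rabs (Im z) * Rabs (Im z) = Im z * Im z).
    { rewrite <- Rabs_mult; apply Rabs_right; nra. }
    rewrite <- (sqrt_Rsqr (Rabs (Im z) / N)).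
    - f_equal. unfold Rsqr.
      replace (Rabs (Im z) / N * (Rabs (Im z) / N)) with ((Rabs (Im z) * Rabs (Im z)) / (N*N)) by (field; lra).
      rewrite Habs. apply (Rmult_eq_reg_l (N*N)); [|nra]. field_simplify; lra.
    - unfold Rdiv; apply Rmult_le_pos; [apply Rabs_pos|left; apply Rinv_0_lt_compat; lra]. }
  unfold Carg. fold N.
  destruct (Req_EM_T N 0) as [E|_]; [lra|].
  destruct (Rle_dec 0 (Im z)) as [Hi|Hi].
  - rewrite cos_acos, sin_acos, Hs by auto. rewrite Rabs_right by lra.
    split; field; lra.
  - rewrite cos_neg, sin_neg, cos_acos, sin_acos, Hs by auto. rewrite Rabs_left by lra.
    split; field; lra.
Qed.

Lemma Cpow_polar z r phi n : Re z = r * cos phi -> Im z = r * sin phi ->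
  Re (Cpow z n) = r ^ n * cos (INR n * phi) /\ Im (Cpow z n) = r ^ n * sin (INR n * phi).
Proof.
  intros H1 H2. induction n as [|n [IH1 IH2]].
  - simpl. rewrite Rmult_0_l, cos_0, sin_0. split; ring.
  - simpl Cpow. unfold Cmul. simpl Re; simpl Im. rewrite IH1, IH2, H1, H2.
    rewrite S_INR. replace ((INR n + 1) * phi) with (phi + INR n * phi) by ring.
    rewrite cos_plus, sin_plus. simpl. split; ring.
Qed.

Lemma Carg_abs v : 0 < Cnorm v -> Rabs (Carg v) = acos (Re v / Cnorm v).
Proof.
  intros Hp. unfold Carg. destruct (Req_EM_T (Cnorm v) 0); [lra|].
  pose proof (acos_bound (Re v / Cnorm v)).
  destruct (Rle_dec 0 (Im v)).
  - apply Rabs_right; lra.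
  - rewrite Rabs_Ropp. apply Rabs_right; lra.
Qed.

Lemma ratio_bound v : 0 < Cnorm v -> -1 <= Re v / Cnorm v <= 1.
Proof.
  intros Hp. pose proof (Rabs_le_reg _ _ (Re_le_norm v)).
  split; [apply (Rmult_le_reg_l (Cnorm v)); auto; field_simplify; lra|
          apply (Rmult_le_reg_l (Cnorm v)); auto; field_simplify; lra].
Qed.

Lemma sector_open v psi : 0 < psi <= PI -> Rabs (Carg v) < psi ->
  cos psi * Cnorm v <= Re v.
Proof.
  intros Hpsi Ha. destruct (Cnorm_ge0 v) as [Hp|E].
  - rewrite Carg_abs in Ha by auto.
    pose proof (acos_bound (Re v / Cnorm v)).
    pose proof (cos_decreasing_1 (acos (Re v / Cnorm v)) psi ltac:(lra) ltac:(lra) ltac:(lra) ltac:(lra) Ha) as Hc.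
    rewrite cos_acos in Hc by (apply ratio_bound; auto).
    apply (Rmult_lt_compat_r (Cnorm v)) in Hc; auto.
    replace (Re v / Cnorm v * Cnorm v) with (Re v) in Hc by (field; lra). lra.
  - pose proof (Rabs_le_reg _ _ (Re_le_norm v)). rewrite <- E in *.
    assert (Re v = 0) by lra. rewrite H0; lra.
Qed.

Lemma sector_closed u psi : 0 < Cnorm u -> 0 < psi <= PI -> cos psi * Cnorm u <= Re u ->
  Rabs (Carg u) <= psi.
Proof.
  intros Hp Hpsi H. rewrite Carg_abs by auto.
  pose proof (acos_bound (Re u / Cnorm u)).
  destruct (Rle_lt_dec (acos (Re u / Cnorm u)) psi) as [|Hlt]; auto.
  pose proof (cos_decreasing_1 psi (acos (Re u / Cnorm u)) ltac:(lra) ltac:(lra) ltac:(lra) ltac:(lra) Hlt) as Hc.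
  rewrite cos_acos in Hc by (apply ratio_bound; auto).
  apply (Rmult_lt_compat_r (Cnorm u)) in Hc; auto.
  replace (Re u / Cnorm u * Cnorm u) with (Re u) in Hc by (field; lra). lra.
Qed.

Lemma closure_sector psi Rr u : 0 < psi <= PI / 2 -> on_Gamma psi Rr u -> 1 < Cnorm u ->
  cos psi * Cnorm u <= Re u \/ cos psi * Cnorm u <= - Re u.
Proof.
  intros Hpsi [Hcl _] H1.
  assert (Hc : 0 <= cos psi <= 1) by (split; [apply cos_ge_0; lra| apply COS_bound]).
  destruct (Rle_lt_dec (cos psi * Cnorm u) (Re u)) as [|A]; [left; auto|].
  destruct (Rle_lt_dec (cos psi * Cnorm u) (- Re u)) as [|B]; [right; auto|].
  exfalso.
  set (d := Rmin (Cnorm u - 1) (Rmin ((cos psi * Cnorm u - Re u)/2) ((cos psi * Cnorm u + Re u)/2))).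
  assert (Hd : 0 < d) by (unfold d; repeat apply Rmin_pos; lra).
  assert (Hd1 : d <= Cnorm u - 1) by apply Rmin_l.
  assert (Hd2 : d <= (cos psi * Cnorm u - Re u)/2) by (eapply Rle_trans; [apply Rmin_r|apply Rmin_l]).
  assert (Hd3 : d <= (cos psi * Cnorm u + Re u)/2) by (eapply Rle_trans; [apply Rmin_r|apply Rmin_r]).
  destruct (Hcl d Hd) as [v [[_ Hv] Hvu]].
  pose proof (Rabs_le_reg _ _ (Cnorm_rev v u)) as Hn.
  assert (Hre : Rabs (Re v - Re u) < d).
  { pose proof (Re_le_norm (Csub v u)). replace (Re (Csub v u)) with (Re v - Re u) in H by (simpl; ring). lra. }
  pose proof (Rabs_le_reg _ _ (Rlt_le _ _ Hre)) as Hre'.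
  assert (Hre2 : Re v - Re u < d /\ Re u - Re v < d).
  { split; [apply (Rle_lt_trans _ _ _ (Rle_abs _)); auto|].
    rewrite Rabs_minus_sym in Hre. apply (Rle_lt_trans _ _ _ (Rle_abs _)); auto. }
  destruct Hv as [Hv|[Hv|Hv]].
  - lra.
  - pose proof (sector_open v psi ltac:(lra) Hv). nra.
  - pose proof (sector_open (Copp v) psi ltac:(lra) Hv). rewrite Cnorm_opp in H. simpl in H. nra.
Qed.


Lemma INR_n p : (2 <= p)%nat -> INR (2*p-2) = 2 * INR p - 2.
Proof. intros Hp. rewrite minus_INR by lia. rewrite mult_INR. simpl. ring. Qed.

Lemma angle p alpha phi : (2 <= p)%nat ->
  sin (alpha + INR (2*p-2) * phi) = 0 -> cos (alpha + INR (2*p-2) * phi) < 0 ->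
  exists k : Z, (- Z.of_nat p + 2 <= k <= Z.of_nat p - 1)%Z /\
    cos ((PI - alpha) / (2 * INR p - 2) + IZR k * PI / (INR p - 1)) = cos phi /\
    sin ((PI - alpha) / (2 * INR p - 2) + IZR k * PI / (INR p - 1)) = sin phi.
Proof.
  intros Hp Hs Hc. rewrite INR_n in * by auto.
  assert (HP : 1 < INR p) by (apply (lt_INR 1); lia).
  destruct (sin_eq_0_0 _ Hs) as [k0 Hk0].
  pose proof (Z.div_mod k0 2 ltac:(lia)) as Dk.
  pose proof (Z.mod_pos_bound k0 2 ltac:(lia)) as Bk.
  set (m := (k0 / 2)%Z) in *. set (b := (k0 mod 2)%Z) in *.
  assert (Hb : b = 0%Z \/ b = 1%Z) by lia.
  destruct Hb as [Hb|Hb].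
  - exfalso. rewrite Hk0, Dk, Hb in Hc.
    replace (IZR (2 * m + 0) * PI) with (0 + 2 * IZR m * PI) in Hc
      by (rewrite plus_IZR, mult_IZR; simpl; ring).
    rewrite (proj1 (cos_sin_periodZ 0 m)), cos_0 in Hc. lra.
  - set (Nz := (2 * Z.of_nat p - 2)%Z).
    assert (HNz : (0 < Nz)%Z) by (unfold Nz; lia).
    pose proof (Z.div_mod (m + Z.of_nat p - 2) Nz ltac:(lia)) as Dm.
    pose proof (Z.mod_pos_bound (m + Z.of_nat p - 2) Nz HNz) as Bm.
    set (q := ((m + Z.of_nat p - 2) / Nz)%Z) in *.
    set (r := ((m + Z.of_nat p - 2) mod Nz)%Z) in *.
    exists (r - (Z.of_nat p - 2))%Z. split; [unfold Nz in *; lia|].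
    assert (Ek : IZR (r - (Z.of_nat p - 2)) = IZR m - (2 * INR p - 2) * IZR q).
    { assert (E : (r - (Z.of_nat p - 2) = m - Nz * q)%Z) by lia.
      rewrite E, minus_IZR, mult_IZR. unfold Nz.
      rewrite minus_IZR, mult_IZR, <- INR_IZR_INZ. simpl. ring. }
    assert (Ephi : phi = (IZR k0 * PI - alpha) / (2 * INR p - 2)) by (rewrite <- Hk0; field; lra).
    assert (Ek0 : IZR k0 = 2 * IZR m + 1) by (rewrite Dk, Hb, plus_IZR, mult_IZR; simpl; ring).
    replace ((PI - alpha) / (2 * INR p - 2) + IZR (r - (Z.of_nat p - 2)) * PI / (INR p - 1))
      with (phi + 2 * IZR (- q) * PI).
    + apply cos_sin_periodZ.
    + rewrite Ek, Ephi, Ek0, opp_IZR. field. lra.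
Qed.


Lemma cut_lemma p lam : (2 <= p)%nat -> 0 < Cnorm lam -> 1 < cut_radius p lam ->
  Cnorm lam < fc_branch p.
Proof.
  intros Hp Hr Hc.
  assert (HP : 1 < INR p) by (apply (lt_INR 1); lia).
  set (r := Cnorm lam) in *. set (P := INR p) in *.
  unfold cut_radius, Rpower in Hc. fold r P in Hc.
  rewrite <- !exp_plus in Hc.
  set (E := - (1 / (2 * P - 2)) * ln r + 1 / 2 * ln (P - 1) + - (P / (2 * P - 2)) * ln P) in Hc.
  assert (HE : 0 < E) by (rewrite <- exp_0 in Hc; apply exp_lt_inv; exact Hc).
  assert (HnE : (2*P-2) * E = - ln r + (P - 1) * ln (P-1) - P * ln P) by (unfold E; field; lra).
  assert (0 < (2*P-2)*E) by (apply Rmult_lt_0_compat; lra).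
  assert (Hc0 := fc_pos p Hp).
  apply ln_lt_inv; auto.
  unfold fc_branch. fold P. unfold Rdiv.
  rewrite ln_mult, ln_Rinv, !ln_pow by (try apply Rinv_0_lt_compat; try apply pow_lt; lra).
  rewrite minus_INR by lia. fold P. simpl. lra.
Qed.

Lemma u_nonzero psi Rr u : 1 < Rr -> on_Gamma psi Rr u -> 0 < Cnorm u.
Proof.
  intros HR [_ Hn]. destruct (Cnorm_ge0 u) as [|E]; auto.
  exfalso; apply Hn. split; [lra|left; lra].
Qed.

Lemma slit_big p eps psi lam u : (2 <= p)%nat -> psi_admissible p eps psi ->
  0 < Cnorm lam -> Rabs (Carg lam) <= PI - eps -> 0 < Cnorm u ->
  in_double_sector psi u ->
  in_slit_plane p (Copp (Cmul lam (Cpow u (2*p-2)))).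
Proof.
  intros Hp Had Hl1 Harg Hu Hds [Him Hre].
  pose proof (fc_pos p Hp) as Hc0.
  destruct (polar u Hu) as [Pu1 Pu2].
  destruct (polar lam Hl1) as [Pl1 Pl2].
  set (rho := Cnorm u) in *. set (phi := Carg u) in *.
  set (r := Cnorm lam) in *. set (alpha := Carg lam) in *.
  destruct (Cpow_polar u rho phi (2*p-2) Pu1 Pu2) as [Q1 Q2].
  set (n := INR (2*p-2)) in *.
  set (U := Cpow u (2*p-2)) in *.
  simpl in Him, Hre. rewrite Q1, Q2, Pl1, Pl2 in Him, Hre.
  assert (Hrn : 0 < r * rho ^ (2*p-2)) by (apply Rmult_lt_0_compat; [lra|apply pow_lt; lra]).
  assert (Hsin : sin (alpha + n * phi) = 0).
  { rewrite sin_plus. apply (Rmult_eq_reg_l (- (r * rho^(2*p-2)))); [|lra].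
    rewrite Rmult_0_r, <- Him. ring. }
  assert (Hcos : cos (alpha + n * phi) < 0).
  { rewrite cos_plus. apply (Rmult_lt_reg_l (r * rho^(2*p-2))); [lra|].
    rewrite Rmult_0_r.
    match goal with |- ?A < _ => replace A with
            ((r * cos alpha * (rho ^ (2 * p - 2) * cos (n * phi)) -
                  r * sin alpha * (rho ^ (2 * p - 2) * sin (n * phi)))) by ring end.
    lra. }
  destruct (angle p alpha phi Hp Hsin Hcos) as [k [Hk [Ec Es]]].
  apply (Had lam (Cnorm_pos_neq lam Hl1) Harg k Hk rho Hu). fold alpha.
  replace (Cscale rho (Cexpi ((PI - alpha) / (2 * INR p - 2) + IZR k * PI / (INR p - 1)))) with u;
    [auto|].
  unfold Cscale, Cexpi; cbn [Re Im]. rewrite Ec, Es, <- Pu1, <- Pu2. destruct u; reflexivity.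
Qed.

Lemma slit p eps psi eta lam u Rr : (2 <= p)%nat -> 0 < eps -> 0 < psi < PI / 4 ->
  psi_admissible p eps psi -> inP eps eta lam -> 1 < cut_radius p lam ->
  1 < Rr -> on_Gamma psi Rr u ->
  in_slit_plane p (Copp (Cmul lam (Cpow u (2*p-2)))).
Proof.
  intros Hp He Hpsi Had [[Hl1 Hl2] Harg] Hcut HR HG.
  pose proof (u_nonzero psi Rr u HR HG) as Hu.
  pose proof (cut_lemma p lam Hp Hl1 Hcut) as Hlc.
  pose proof (fc_pos p Hp) as Hc0.
  pose proof PI_RGT_0 as HPI.
  destruct (Rle_lt_dec (Cnorm u) 1) as [Hle|Hgt].
  - intros [Him Hre].
    set (z := Copp (Cmul lam (Cpow u (2*p-2)))) in *.
    assert (Hz : Cnorm z <= Cnorm lam).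
    { unfold z. rewrite Cnorm_opp, Cnorm_mul, Cnorm_pow.
      assert (Cnorm u ^ (2*p-2) <= 1) by (rewrite <- (pow1 (2*p-2)); apply pow_incr; lra).
      assert (0 <= Cnorm u ^ (2*p-2)) by (apply pow_le; lra). nra. }
    pose proof (Rabs_le_reg _ _ (Re_le_norm z)). lra.
  - apply (slit_big p eps psi lam u Hp Had Hl1 ltac:(lra) Hu).
    destruct (closure_sector psi Rr u ltac:(lra) HG Hgt) as [Hs|Hs].
    + left; apply sector_closed; auto; lra.
    + right; apply sector_closed; rewrite ?Cnorm_opp; simpl; auto; lra.
Qed.


Theorem mainTheorem2 :
  forall (p : nat) (eps psi eta : R),
    (2 <= p)%nat -> 0 < eps ->
    0 < psi < PI / 4 -> psi_admissible p eps psi ->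
    0 < eta ->
    (forall lam, inP eps eta lam -> 1 < cut_radius p lam) ->
    forall T : Cx -> Cx, is_FussCatalan p T ->
    exists Cst : R,
      forall (Rr : R), 1 < Rr ->
      forall lam : Cx, inP eps eta lam ->
      forall u : Cx, on_Gamma psi Rr u ->
        Cnorm (g_lam p T lam u)
        <= Cst * Rpower (Cnorm lam) (1 / (4 * INR p ^ 2))
               * Rpower (Cnorm u) (1 + 1 / (2 * INR p) - 1 / (2 * INR p ^ 2)).
Proof.
  intros p eps psi eta Hp He Hpsi Had Heta Hcut T HT.
  assert (HP : 2 <= INR p) by (apply (le_INR 2); lia).
  set (a := 1 / (4 * INR p ^ 2)).
  assert (Ha : 0 < a <= 1).
  { unfold a. split; [apply Rdiv_lt_0_compat; [lra|]; simpl; nra|].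
    apply (Rmult_le_reg_l (4 * INR p ^ 2)); [simpl; nra|].
    unfold Rdiv. rewrite Rmult_1_l, Rinv_r by (simpl; nra). simpl; nra. }
  destruct (sqrtT_bound p T a Hp HT Ha) as [C0 [HC0 HB]].
  exists C0. intros Rr HR lam Hlam u Hu.
  pose proof (slit p eps psi eta lam u Rr Hp He Hpsi Had Hlam (Hcut lam Hlam) HR Hu) as Hz.
  pose proof (u_nonzero psi Rr u HR Hu) as Hu0.
  destruct Hlam as [[Hl1 Hl2] _].
  unfold g_lam, h_lam, f_lam.
  set (z := Copp (Cmul lam (Cpow u (2 * p - 2)))) in *.
  replace (Csub (Cmul u (Csqrt (T z))) u) with (Cmul u (Csub (Csqrt (T z)) Defs.C1))
    by (destruct u, (Csqrt (T z)); unfold Cmul, Csub, Cadd, Copp; simpl; f_equal; ring).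
  rewrite Cnorm_mul.
  assert (Hnz : Cnorm z = Cnorm lam * Cnorm u ^ (2*p-2))
    by (unfold z; rewrite Cnorm_opp, Cnorm_mul, Cnorm_pow; reflexivity).
  assert (Hpow : 0 < Cnorm u ^ (2*p-2)) by (apply pow_lt; lra).
  assert (Hzp : 0 < Cnorm z) by (rewrite Hnz; apply Rmult_lt_0_compat; lra).
  specialize (HB z Hz Hzp).
  rewrite Hnz, <- Rpower_mult_distr, <- Rpower_pow, Rpower_mult in HB by lra.
  rewrite INR_n in HB by auto.
  assert (He1 : 1 + 1 / (2 * INR p) - 1 / (2 * INR p ^ 2) = 1 + (2 * INR p - 2) * a)
    by (unfold a; field; lra).
  rewrite He1, Rpower_plus, Rpower_1 by lra.
  pose proof (Cnorm_ge0 (Csub (Csqrt (T z)) Defs.C1)).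
  set (X := Cnorm (Csub (Csqrt (T z)) Defs.C1)) in *.
  set (A := Rpower (Cnorm lam) a) in *.
  set (Bq := Rpower (Cnorm u) ((2 * INR p - 2) * a)) in *.
  apply (Rmult_le_compat_l (Cnorm u)) in HB; [|lra].
  lra.
Qed.
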